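(* Let $G$ be a profinite group, let $g\in G$, and let $K$ be the closed normal subgroup of $G$ generated by $g$. Then $d(K/[K,K])\le |G:C_G(g)K|$, where $C_G(g)$ is the centralizer of $g$ in $G$.
   Context: $[K,K]$ denotes the closed commutator subgroup of $K$, and $d(\cdot)$ denotes the minimal number of topological generators of a profinite group. *)

(* Defs.v *)
From HB Require Import structures.
From mathcomp Require Import all_boot all_order all_algebra.
From mathcomp Require Import all_classical all_reals all_analysis.
Set Implicit Arguments. Unset Strict Implicit. Unset Printing Implicit Defensive.
Local Open Scope classical_set_scope.

Section ProfiniteDefs.
Variables (T : topologicalType) (mul : T -> T -> T) (inv : T -> T) (one : T).

Definition is_profinite_group : Prop :=
  [/\ (forall x y z, mul x (mul y z) = mul (mul x y) z),
      (forall x, mul one x = x /\ mul x one = x),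
      (forall x, mul (inv x) x = one /\ mul x (inv x) = one),
      continuous (fun p : T * T => mul p.1 p.2) /\ continuous inv &
      [/\ compact [set: T], hausdorff_space T &
      totally_disconnected [set: T]]].

Definition is_subgroup (H : set T) : Prop :=
  [/\ H one, (forall x y, H x -> H y -> H (mul x y)) & (forall x, H x -> H (inv x))].

Definition is_normal (H : set T) : Prop :=
  forall x h, H h -> H (mul (mul (inv x) h) x).

Definition closed_gen (A : set T) : set T :=
  [set x | forall H, is_subgroup H -> closed H -> A `<=` H -> H x].

Definition closed_normal_closure (g : T) : set T :=
  [set x | forall H, is_subgroup H -> is_normal H -> closed H -> H g -> H x].

Definition commg (a b : T) : T := mul (mul (inv a) (inv b)) (mul a b).

Definition closed_commutator (K : set T) : set T :=
  closed_gen [set commg a b | a in K & b in K].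

Definition centralizer (g : T) : set T := [set x | mul x g = mul g x].

Definition set_mul (A B : set T) : set T := [set mul a b | a in A & b in B].

(* |G : H| <= n : G is covered by at most n left cosets of H *)
Definition index_le (H : set T) (n : nat) : Prop :=
  exists t : 'I_n -> T, forall x, exists i, exists2 h, H h & x = mul (t i) h.

(* d(K/N) <= n, for a closed normal subgroup N of the closed subgroup K:
   K/N is topologically generated by the images of n elements of K,
   i.e. K is the closed subgroup generated by N together with n elements. *)
Definition quot_gen_le (K N : set T) (n : nat) : Prop :=
  exists k : 'I_n -> T, (forall i, K (k i)) /\ closed_gen (N `|` range k) = K.

End ProfiniteDefs.

(* Main.v *)
Require Import Defs.
From HB Require Import structures.
From mathcomp Require Import all_boot all_order all_algebra.
From mathcomp Require Import all_classical all_reals all_analysis.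
Local Open Scope classical_set_scope.

Theorem lemma3p1 (T : topologicalType) (mul : T -> T -> T) (inv : T -> T)
  (one : T) (HG : is_profinite_group mul inv one) (g : T) (n : nat) :
  let K := closed_normal_closure mul inv one g in
  index_le mul (set_mul mul (centralizer mul g) K) n ->
  quot_gen_le mul inv one K (closed_commutator mul inv one K) n.
Proof.
move=> K [t Ht].
case: HG => assoc idl invl [mulc invc] _.
have mul1g x : mul one x = x by case: (idl x).
have mulg1 x : mul x one = x by case: (idl x).
have mulVg x : mul (inv x) x = one by case: (invl x).
have mulgV x : mul x (inv x) = one by case: (invl x).
have mulKg a b : mul (inv a) (mul a b) = b by rewrite assoc mulVg mul1g.
have mulKVg a b : mul a (mul (inv a) b) = b by rewrite assoc mulgV mul1g.
have invU a b : mul a b = one -> inv a = b.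
  by move=> h; rewrite -[inv a]mulg1 -h mulKg.
have invK a : inv (inv a) = a by apply: invU; rewrite mulVg.
have invM a b : inv (mul a b) = mul (inv b) (inv a).
  by apply: invU; rewrite -!assoc (mulKVg b) mulgV.
have inv1 : inv one = one by apply: invU; rewrite mul1g.
pose cj y h := mul (mul (inv y) h) y.
have conjM y a b : cj y (mul a b) = mul (cj y a) (cj y b).
  by rewrite /cj -!assoc mulKVg.
have conj1 y : cj y one = one by rewrite /cj mulg1 mulVg.
have conjV y a : cj y (inv a) = inv (cj y a).
  by apply/esym/invU; rewrite -conjM mulgV conj1.
have mull_cont a : continuous (mul a).
  move=> x; apply: (@continuous2_cvg _ _ _ _ _ _ (fun=> a) id mul a x).
  - exact: (mulc (a, x)).
  - exact: cvg_cst.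
  - exact: cvg_id.
have mulr_cont a : continuous (mul^~ a).
  move=> x; apply: (@continuous2_cvg _ _ _ _ _ _ id (fun=> a) mul x a).
  - exact: (mulc (x, a)).
  - exact: cvg_id.
  - exact: cvg_cst.
have conj_cont y : continuous (cj y).
  move=> x; exact: (continuous_comp (mull_cont (inv y) x) (mulr_cont y _)).

have key S : (forall y s, S s -> S (cj y s)) ->
    forall y x, closed_gen mul inv one S x -> closed_gen mul inv one S (cj y x).
  move=> SI y x hx H [H1 HM HV] Hc HS.
  apply: (hx [set h | H (cj y h)]).
  - split => /=; [by rewrite conj1 | by move=> a b ha hb; rewrite conjM; apply HM
                 | by move=> a ha; rewrite conjV; apply HV].
  - exact: (preimage_closed (fun z _ => conj_cont y z) Hc).
  - by move=> s Ss; apply: HS; apply: SI.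
have cg_sub S : is_subgroup mul inv one (closed_gen mul inv one S).
  split.
  - by move=> H [H1 _ _].
  - by move=> a b ha hb H Hs Hc HS; case: (Hs) => _ HM _; apply: HM; [exact: ha|exact: hb].
  - by move=> a ha H Hs Hc HS; case: (Hs) => _ _ HV; apply: HV; exact: ha.
have cg_closed S : closed (closed_gen mul inv one S).
  have -> : closed_gen mul inv one S = \bigcap_(H in [set H | is_subgroup mul inv one H /\ closed H /\ S `<=` H]) H.
    apply/seteqP; split => x hx.
    - by move=> H [a [b c]]; exact: hx.
    - by move=> H a b c; exact: (hx H (conj a (conj b c))).
  by apply: closed_bigI => H [_ []].
have Ksub : is_subgroup mul inv one K.
  split.
  - by move=> H [H1 _ _].
  - by move=> a b ha hb H Hs Hn Hc Hg; case: (Hs) => _ HM _; apply: HM; [exact: ha|exact: hb].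
  - by move=> a ha H Hs Hn Hc Hg; case: (Hs) => _ _ HV; apply: HV; exact: ha.
have Knorm y h : K h -> K (cj y h).
  by move=> hh H Hs Hn Hc Hg; exact: (Hn _ _ (hh H Hs Hn Hc Hg)).
pose N := closed_commutator mul inv one K.
have Ncomm a b : K a -> K b -> N (Defs.commg mul inv a b).
  move=> ha hb H _ _ HS; apply: HS; exists a => //; exists b => //.
have Nnorm y x : N x -> N (cj y x).
  apply: key => y' s [a ha [b hb <-]].
  exists (cj y' a); first exact: Knorm.
  exists (cj y' b); first exact: Knorm.
  by rewrite /Defs.commg !conjM !conjV.
exists (fun i => cj (inv (t i)) g); split.
  by move=> i; apply: Knorm => H.
apply/seteqP; split.
- move=> x hx H Hs Hn Hc Hg.
  have KH : K `<=` H by move=> z hz; exact: hz H Hs Hn Hc Hg.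
  apply: hx => //.
  move=> z [hz|[i _ <-]].
  + apply: hz => //.
    move=> w [a ha [b hb <-]]; case: (Hs) => _ HM HV; rewrite /Defs.commg.
    by apply: (HM); apply: (HM); try apply: (HV); apply: (KH).
  + exact: Hn.
- move=> x hx.
  pose S := [set z | exists y, z = cj y g].
  have SA : closed_gen mul inv one S `<=` closed_gen mul inv one (N `|` range (fun i => cj (inv (t i)) g)).
    move=> z hz H Hs Hc HA; apply: hz => //.
    move=> _ [y ->].
    have [i [_ [c hc [kk hkk <-]]] hy] := Ht (inv y).
    have ey : y = inv (mul (t i) (mul c kk)) by rewrite -hy invK.
    have hc' : mul (inv c) g = mul g (inv c).
      by rewrite -{1}[g]mulg1 -(mulgV c) (assoc g c) -hc -(assoc c g) mulKg.
    have hc'' w : mul (inv c) (mul g w) = mul g (mul (inv c) w) by rewrite assoc hc' -assoc.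
    have -> : cj y g = mul (cj (inv (mul (t i) c)) (Defs.commg mul inv (inv kk) (inv g))) (cj (inv (t i)) g).
      rewrite ey /cj /Defs.commg !invM !invK -!assoc (mulKg (t i)) hc'' (mulKg g).
      done.
    case: (Hs) => _ HM _; apply: HM; apply: HA; last by right; exists i.
    left; apply: Nnorm; apply: Ncomm; case: Ksub => _ _ HV; apply: HV => //.
  apply: SA; apply: hx.
  + exact: cg_sub.
  + move=> y h hh; apply: (key S) hh => y' s [y0 ->]; exists (mul y0 y').
    by rewrite /cj invM -!assoc.
  + exact: cg_closed.
  + move=> H Hs Hc HS; apply: HS; exists one; by rewrite /cj inv1 mul1g mulg1.
Qed.
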